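(* Let $(\mathcal{X},\rho)$ be a totally bounded metric space, let $c:\mathcal{X}\to\mathcal{Y}$ be a concept, and let $\ell$ be the zero-one loss $\ell(x,y,\hat y)=\mathbb{1}\{y\neq\hat y\}$. Then there exists a sequence of instances $(x_t)_{t\ge1}$ in $\mathcal{X}$ on which the 1-nearest neighbor rule fails to achieve sublinear regret on $c$, i.e. such that $$\frac1T\sum_{t=1}^T \mathbb{1}\{c(x_t)\neq \hat y_t\}\not\to 0 \quad (T\to\infty),$$ if and only if there is no positive separation between classes: $$\inf_{x,x'\in\mathcal{X}:\,c(x)\neq c(x')}\rho(x,x')=0.$$
   Context: Online classification: at each time $t=1,2,\dots$ the learner receives $x_t\in\mathcal{X}$, predicts $\hat y_t\in\mathcal{Y}$, then sees the label $y_t=c(x_t)$ (realizable setting with fixed concept $c$). The 1-nearest neighbor rule predicts $\hat y_t=y_{\mathrm{NN}_t}$ where $\mathrm{NN}_t\in\arg\min_{\tau=1,\dots,t-1}\rho(x_t,x_\tau)$, with ties broken arbitrarily (the prediction at $t=1$ is arbitrary). Sublinear regret here means the average loss $\frac1T\sum_{t\le T}\ell(x_t,y_t,\hat y_t)$ converges to $0$. The infimum over an empty set is $+\infty$. *)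

(* Defs.v *)
From HB Require Import structures.
From mathcomp Require Import all_boot all_order all_algebra.
From mathcomp Require Import all_classical all_reals all_analysis.
Set Implicit Arguments. Unset Strict Implicit. Unset Printing Implicit Defensive.
Import Order.TTheory GRing.Theory Num.Theory.
Local Open Scope classical_set_scope.
Local Open Scope ring_scope.

Definition is_metric (R : realType) (X : Type) (rho : X -> X -> R) : Prop :=
  [/\ forall x y, 0 <= rho x y,
      forall x y, rho x y = 0 <-> x = y,
      forall x y, rho x y = rho y x
    & forall x y z, rho x z <= rho x y + rho y z].

Definition totally_bounded (R : realType) (X : Type) (rho : X -> X -> R) : Prop :=
  forall eps : R, 0 < eps ->
    exists (n : nat) (f : 'I_n -> X), forall x, exists i : 'I_n, rho x (f i) < eps.

Definition valid_tiebreak (R : realType) (X : Type) (rho : X -> X -> R)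
    (tb : seq X -> X -> nat) : Prop :=
  forall (s : seq X) (x : X), s <> [::] ->
    (tb s x < size s)%N /\
    forall j, (j < size s)%N -> rho x (nth x s (tb s x)) <= rho x (nth x s j).

(* Prediction of the 1-NN rule at (0-based) time t on the sequence xs:
   the first prediction is given by the arbitrary function [first]. *)
Definition nn_pred (X Y : Type) (c : X -> Y) (tb : seq X -> X -> nat)
    (first : X -> Y) (xs : nat -> X) (t : nat) : Y :=
  if t is t'.+1 then c (xs (tb [seq xs i | i <- iota 0 t] (xs t)))
  else first (xs 0%N).

Definition nn_mistake (X Y : Type) (c : X -> Y) (tb : seq X -> X -> nat)
    (first : X -> Y) (xs : nat -> X) (t : nat) : nat :=
  asbool (c (xs t) <> nn_pred c tb first xs t).

(* average loss over the first T = n.+1 rounds *)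
Definition nn_avg_loss (R : realType) (X Y : Type) (c : X -> Y)
    (tb : seq X -> X -> nat) (first : X -> Y) (xs : nat -> X) (n : nat) : R :=
  (\sum_(t < n.+1) nn_mistake c tb first xs t)%:R / n.+1%:R.

(* infimum of distances between points with different labels (+oo if empty) *)
Definition class_sep (R : realType) (X Y : Type) (rho : X -> X -> R) (c : X -> Y)
  : \bar R :=
  ereal_inf [set (rho p.1 p.2)%:E | p in [set p : X * X | c p.1 <> c p.2]].

(* Main.v *)
Require Import Defs.
From HB Require Import structures.
From mathcomp Require Import all_boot all_order all_algebra.
From mathcomp Require Import all_classical all_reals all_analysis.
From mathcomp Require Import lra zify.
Import Order.TTheory GRing.Theory Num.Theory.
Import numFieldNormedType.Exports.
Local Open Scope classical_set_scope.
Local Open Scope ring_scope.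

Lemma nth_past (X : Type) (xs : nat -> X) d t j : (j < t)%N ->
  nth d [seq xs i | i <- iota 0 t] j = xs j.
Proof. by move=> jt; rewrite (nth_map 0%N) ?size_iota // nth_iota. Qed.

Lemma sep_pos (R : realType) (X Y : Type) (rho : X -> X -> R) (c : X -> Y) :
  is_metric rho -> class_sep rho c <> 0%E ->
  exists d : R, 0 < d /\ forall x y, c x <> c y -> d <= rho x y.
Proof.
move=> [h0 _ _ _] hs.
have H0 : (0 <= class_sep rho c)%E.
  apply: le_ereal_inf_tmp => _ [p _ <-]; by rewrite lee_fin.
move: hs H0; case E: (class_sep rho c) => [r| |] hs H0.
- exists r; split; first by rewrite lt_def; apply/andP; split;
    [apply/eqP => r0; apply: hs; rewrite r0 | by rewrite -lee_fin].
  move=> x y cxy; rewrite -lee_fin -E; apply: ereal_inf_lbound.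
  by exists (x, y).
- exists 1; split => // x y cxy; exfalso.
  have : (class_sep rho c <= (rho x y)%:E)%E.
    by apply: ereal_inf_lbound; exists (x, y).
  by rewrite E.
- by [].
Qed.

Lemma mistakeP (X Y : Type) (c : X -> Y) tb first (xs : nat -> X) t :
  nn_mistake c tb first xs t.+1 = 1%N ->
  c (xs t.+1) <> c (xs (tb [seq xs i | i <- iota 0 t.+1] (xs t.+1))).
Proof. by rewrite /nn_mistake /=; case: asboolP. Qed.

Lemma mistake01 (X Y : Type) (c : X -> Y) tb first (xs : nat -> X) t :
  nn_mistake c tb first xs t = (nn_mistake c tb first xs t == 1%N) :> nat.
Proof. by rewrite /nn_mistake; case: asboolP. Qed.

Lemma far_from_past (R : realType) (X Y : Type) (rho : X -> X -> R) (c : X -> Y)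
  tb first (xs : nat -> X) (d : R) :
  valid_tiebreak rho tb -> (forall x y, c x <> c y -> d <= rho x y) ->
  forall t s, (s <= t)%N -> nn_mistake c tb first xs t.+1 = 1%N ->
  d <= rho (xs t.+1) (xs s).
Proof.
move=> vt hd t s st /mistakeP hm.
set L := [seq xs i | i <- iota 0 t.+1] in hm.
have hL : L <> [::] by rewrite /L /=.
have [jlt hle] := vt L (xs t.+1) hL.
have sz : size L = t.+1 by rewrite size_map size_iota.
rewrite sz in jlt.
have := hle s; rewrite sz ltnS => /(_ st).
rewrite !nth_past // => h.
apply: le_trans h; exact: hd.
Qed.

Lemma sum_bool_card (N : nat) (b : 'I_N -> bool) :
  (\sum_(i < N) (b i : nat) = #|[pred i | b i]|)%N.
Proof. rewrite -sum1_card [RHS]big_mkcond /=; apply: eq_bigr => i _; rewrite inE; by case: (b i). Qed.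

Lemma count_bound (R : realType) (X Y : Type) (rho : X -> X -> R) (c : X -> Y)
  tb first (xs : nat -> X) (d : R) (n : nat) (f : 'I_n -> X) (g : X -> 'I_n) :
  is_metric rho -> valid_tiebreak rho tb ->
  (forall x y, c x <> c y -> d <= rho x y) ->
  (forall x, rho x (f (g x)) < d / 2) ->
  forall N, (\sum_(t < N.+1) nn_mistake c tb first xs t <= n.+1)%N.
Proof.
move=> [_ _ hsym htri] vt hd hg N.
rewrite big_ord_recl /= -add1n leq_add //.
  by rewrite mistake01 leq_b1.
under eq_bigr => i _ do rewrite mistake01.
rewrite (@sum_bool_card N (fun i : 'I_N => nn_mistake c tb first xs (bump 0 i) == 1%N)).
rewrite -[X in (_ <= X)%N]card_ord.
apply: (leq_card_in (fun i : 'I_N => g (xs i.+1))).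
have key : forall i j : nat, (i < j)%N -> nn_mistake c tb first xs j.+1 = 1%N ->
    g (xs i.+1) = g (xs j.+1) -> False.
  move=> i j ij hm he.
  have h1 := @far_from_past R X Y rho c tb first xs d vt hd _ _ ij hm.
  have h2 : rho (xs j.+1) (xs i.+1) < d.
    apply: (le_lt_trans (htri _ (f (g (xs j.+1))) _)).
    rewrite [d]splitr; apply: ltrD; first exact: hg.
    by rewrite hsym -he; exact: hg.
  by move: (lt_le_trans h2 h1); rewrite ltxx.
move=> i j; rewrite !inE /bump /= !add1n => /eqP hi /eqP hj he.
apply/val_inj => /=; case: (ltngtP i j) => // ij; exfalso.
- exact: (key _ _ ij hj he).
- exact: (key _ _ ij hi (esym he)).
Qed.

Lemma partA (R : realType) (X Y : Type) (rho : X -> X -> R) (c : X -> Y)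
  tb first (xs : nat -> X) :
  is_metric rho -> totally_bounded rho -> valid_tiebreak rho tb ->
  class_sep rho c <> 0%E -> nn_avg_loss R c tb first xs @ \oo --> 0.
Proof.
move=> hm htb vt hs.
have [d [d0 hd]] := @sep_pos R X Y rho c hm hs.
have d20 : 0 < d / 2 by rewrite divr_gt0.
have [n [f hf]] := htb (d/2) d20.
have [g hg] := choice hf.
have hb := @count_bound R X Y rho c tb first xs d n f g hm vt hd hg.
apply: (@squeeze_cvgr _ _ _ _ (fun _ => 0) (fun N => n.+1%:R * harmonic N)).
- apply: nearW => N; apply/andP; split.
    by rewrite /nn_avg_loss divr_ge0.
  rewrite /nn_avg_loss /harmonic /= ler_pM2r ?invr_gt0 ?ltr0Sn // ler_nat.
  exact: hb.
- by apply/cvgrPdist_lt => e e0; apply: nearW => _; rewrite subrr normr0.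
- have := cvgM (cvg_cst (n.+1%:R : R)) (@cvg_harmonic R).
  by rewrite mulr0 => h; exact: h.
Qed.

Lemma close_pair (R : realType) (X Y : Type) (rho : X -> X -> R) (c : X -> Y) :
  class_sep rho c = 0%E -> forall eps : R, 0 < eps ->
  exists a b, c a <> c b /\ rho a b < eps.
Proof.
move=> hs eps e0.
have : (class_sep rho c < eps%:E)%E by rewrite hs lte_fin.
case/ereal_inf_lt => _ [p hp <-]; rewrite lte_fin => hlt.
by exists p.1, p.2.
Qed.

Lemma lb1 (R : realType) n (f : nat -> R) : (forall i, 0 < f i) ->
  exists r, 0 < r /\ forall i, (i < n)%N -> r <= f i.
Proof.
move=> hf; elim: n => [|n [r [r0 hr]]]; first by exists 1.
exists (Num.min r (f n)); split; first by rewrite lt_min r0 hf.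
move=> i; rewrite ltnS leq_eqVlt => /orP [/eqP -> | /hr h].
  by rewrite ge_min lexx orbT.
by rewrite ge_min h.
Qed.

Lemma lb2 (R : realType) n (g : nat -> nat -> R) : (forall i j, 0 < g i j) ->
  exists r, 0 < r /\ forall i j, (i < n)%N -> (j < n)%N -> r <= g i j.
Proof.
move=> hg; elim: n => [|n [r [r0 hr]]]; first by exists 1.
have [r1 [r10 hr1]] := @lb1 R n.+1 (g n) (fun j => hg n j).
have [r2 [r20 hr2]] := @lb1 R n.+1 (g^~ n) (fun i => hg i n).
exists (Num.min r (Num.min r1 r2)); split; first by rewrite !lt_min r0 r10 r20.
move=> i j hi hj.
have m1 : Num.min r (Num.min r1 r2) <= r1.
  by rewrite ge_min; apply/orP; right; rewrite ge_min lexx.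
have m2 : Num.min r (Num.min r1 r2) <= r2.
  by rewrite ge_min; apply/orP; right; rewrite ge_min lexx orbT.
have m0 : Num.min r (Num.min r1 r2) <= r by rewrite ge_min lexx.
case: (ltngtP i n) => [i_n | n_i | ->].
- case: (ltngtP j n) => [j_n | n_j | ->].
  + exact: le_trans m0 (hr i j i_n j_n).
  + by move: hj; rewrite ltnS leqNgt n_j.
  + exact: le_trans m2 (hr2 i hi).
- by move: hi; rewrite ltnS leqNgt n_i.
- exact: le_trans m1 (hr1 j hj).
Qed.

Lemma sep_seq (R : realType) (X : Type) (rho : X -> X -> R) (d0 : X) (s : seq X) :
  exists r, 0 < r /\ forall i j, (i < size s)%N -> (j < size s)%N ->
    0 < rho (nth d0 s i) (nth d0 s j) -> r <= rho (nth d0 s i) (nth d0 s j).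
Proof.
pose g i j := if 0 < rho (nth d0 s i) (nth d0 s j) then rho (nth d0 s i) (nth d0 s j) else 1.
have hg : forall i j, 0 < g i j by move=> i j; rewrite /g; case: ifP.
have [r [r0 hr]] := @lb2 R (size s) g hg.
exists r; split => // i j hi hj hp.
by have := hr i j hi hj; rewrite /g hp.
Qed.

Lemma choose_pair (R : realType) (X Y : Type) (rho : X -> X -> R) (c : X -> Y) (d0 : X) :
  class_sep rho c = 0%E -> forall s : seq X,
  exists p : X * X, c p.1 <> c p.2 /\ forall i j, (i < size s)%N -> (j < size s)%N ->
    0 < rho (nth d0 s i) (nth d0 s j) -> 4 * rho p.1 p.2 < rho (nth d0 s i) (nth d0 s j).
Proof.
move=> hs s.
have [r [r0 hr]] := @sep_seq R X rho d0 s.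
have r40 : 0 < r / 4 by rewrite divr_gt0.
have [a [b [cab hab]]] := @close_pair R X Y rho c hs _ r40.
exists (a, b); split => // i j hi hj hp.
apply: (lt_le_trans _ (hr i j hi hj hp)) => /=.
by rewrite mulrC -ltr_pdivlMr.
Qed.

Fixpoint hist (X : Type) (pr : seq X -> X * X) (k : nat) : seq X :=
  if k is k'.+1 then hist X pr k' ++ [:: (pr (hist X pr k')).1; (pr (hist X pr k')).2]
  else [::].
Arguments hist {X}.

Definition hxs (X : Type) (pr : seq X -> X * X) (d0 : X) (t : nat) : X :=
  nth d0 (hist pr t.+1) t.
Arguments hxs {X}.

Lemma size_hist {X : Type} (pr : seq X -> X * X) k : size (hist pr k) = k.*2.
Proof. by elim: k => //= k IH; rewrite size_cat IH /= doubleS addn2. Qed.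

Lemma hist_prefix {X : Type} (pr : seq X -> X * X) k j :
  exists s, hist pr (k + j) = hist pr k ++ s.
Proof.
elim: j => [|j [s IH]]; first by exists [::]; rewrite addn0 cats0.
exists (s ++ [:: (pr (hist pr (k + j))).1; (pr (hist pr (k + j))).2]).
by rewrite addnS /= IH catA.
Qed.

Lemma hxs_nth {X : Type} (pr : seq X -> X * X) d0 t K : (t < K.*2)%N ->
  hxs pr d0 t = nth d0 (hist pr K) t.
Proof.
move=> tK; rewrite /hxs.
have [s1 h1] := hist_prefix pr K t.+1.
have [s2 h2] := hist_prefix pr t.+1 K.
have : nth d0 (hist pr (K + t.+1)) t = nth d0 (hist pr (t.+1 + K)) t by rewrite addnC.
rewrite h1 h2 !nth_cat !size_hist tK.
have -> // : (t < t.+1.*2)%N.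
by rewrite -!muln2; lia.
Qed.

Lemma hxs_past {X : Type} (pr : seq X -> X * X) d0 k :
  [seq hxs pr d0 i | i <- iota 0 k.*2] = hist pr k.
Proof.
apply: (@eq_from_nth _ d0); first by rewrite size_map size_iota size_hist.
move=> i; rewrite size_map size_iota => ik.
by rewrite (nth_map 0%N) ?size_iota // nth_iota // add0n (hxs_nth _ _ _ _ ik).
Qed.

Lemma hxs_a {X : Type} (pr : seq X -> X * X) d0 k :
  hxs pr d0 k.*2 = (pr (hist pr k)).1.
Proof.
rewrite (@hxs_nth X pr d0 k.*2 k.+1); last by rewrite doubleS ltnS leqnSn.
by rewrite /= nth_cat size_hist ltnn subnn.
Qed.

Lemma hxs_b {X : Type} (pr : seq X -> X * X) d0 k :
  hxs pr d0 k.*2.+1 = (pr (hist pr k)).2.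
Proof.
rewrite (@hxs_nth X pr d0 k.*2.+1 k.+1); last by rewrite doubleS.
by rewrite /= nth_cat size_hist ltnNge leqnSn /= subSn // subnn.
Qed.

Lemma hxs_past1 {X : Type} (pr : seq X -> X * X) d0 k :
  [seq hxs pr d0 i | i <- iota 0 k.*2.+1] = rcons (hist pr k) (pr (hist pr k)).1.
Proof.
by rewrite -addn1 iotaD map_cat hxs_past /= add0n hxs_a cats1.
Qed.

Lemma mistakeE (X Y : Type) (c : X -> Y) tb first (xs : nat -> X) t : t <> 0%N ->
  nn_mistake c tb first xs t =
  asbool (c (xs t) <> c (xs (tb [seq xs i | i <- iota 0 t] (xs t)))).
Proof. by case: t. Qed.

Lemma pair_mistake (R : realType) (X Y : Type) (rho : X -> X -> R) (c : X -> Y)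
  tb first (pr : seq X -> X * X) (d0 : X) :
  is_metric rho -> valid_tiebreak rho tb ->
  (forall s, c (pr s).1 <> c (pr s).2 /\ forall i j, (i < size s)%N -> (j < size s)%N ->
    0 < rho (nth d0 s i) (nth d0 s j) -> 4 * rho (pr s).1 (pr s).2 < rho (nth d0 s i) (nth d0 s j)) ->
  forall k, (1 <= nn_mistake c tb first (hxs pr d0) k.*2
                + nn_mistake c tb first (hxs pr d0) k.*2.+1)%N.
Proof.
move=> [h0 h0e hsym htri] vt hpr k.
have [cab hsep] := hpr (hist pr k).
rewrite [nn_mistake _ _ _ _ k.*2.+1]mistakeE // hxs_past1 hxs_b.
set P := hist pr k in cab hsep *.
set a := (pr P).1 in cab hsep *.
set b := (pr P).2 in cab hsep *.
have szP : size P = k.*2 by rewrite size_hist.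
set j' := tb (rcons P a) b.
have ne1 : rcons P a <> [::] by move/(f_equal size); rewrite size_rcons.
have [jlt hle] := vt (rcons P a) b ne1.
rewrite size_rcons szP in jlt.
case: (asboolP (c b <> c (hxs pr d0 j'))) => [_|hn]; first by rewrite addn1.
have cbq : c b = c (hxs pr d0 j').
  by case: (pselect (c b = c (hxs pr d0 j'))) => // hne; exfalso; apply: hn.
have jlt2 : (j' < k.*2)%N.
  move: jlt; rewrite ltnS leq_eqVlt => /orP [/eqP ej|//].
  by exfalso; apply: cab; rewrite cbq (_ : j' = k.*2) // hxs_a.
have xq : hxs pr d0 j' = nth d0 P j' by rewrite (hxs_nth _ _ _ _ jlt2).
have hbq : rho b (nth d0 P j') <= rho b a.
  have := hle k.*2; rewrite size_rcons szP ltnSn => /(_ isT).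
  by rewrite !nth_rcons szP jlt2 ltnn eqxx (set_nth_default d0) ?szP.
have k0 : k.*2 <> 0%N by move=> e; rewrite e in jlt2.
rewrite [nn_mistake _ _ _ _ k.*2]mistakeE // hxs_past hxs_a -/P -/a.
have neP : P <> [::] by move=> e; rewrite e in szP; apply: k0.
have [jlt0 hle0] := vt P a neP.
rewrite szP in jlt0.
set j := tb P a in jlt0 hle0 *.
have haq : rho a (nth d0 P j) <= rho a (nth d0 P j').
  have := hle0 j'; rewrite szP => /(_ jlt2).
  by rewrite !(set_nth_default d0) ?szP.
have xq' : hxs pr d0 j = nth d0 P j by rewrite (hxs_nth _ _ _ _ jlt0).
have eqq : nth d0 P j' = nth d0 P j.
  apply/h0e; apply/eqP; rewrite eq_le h0 andbT; apply/negP => /negP.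
  rewrite -ltNge => hp.
  have := hsep j' j; rewrite szP => /(_ jlt2 jlt0 hp).
  apply/negP; rewrite -leNgt.
  have t1 := htri (nth d0 P j') a (nth d0 P j).
  have t2 := htri a b (nth d0 P j').
  have s1 := hsym (nth d0 P j') a.
  have s2 := hsym b a.
  lra.
case: (asboolP (c a <> c (hxs pr d0 j))) => [_|hn2]; first by [].
exfalso; apply: hn2; rewrite xq' -eqq -xq -cbq => e; exact: cab.
Qed.

Lemma partB (R : realType) (X Y : Type) (rho : X -> X -> R) (c : X -> Y)
  tb first :
  is_metric rho -> valid_tiebreak rho tb -> class_sep rho c = 0%E ->
  exists xs : nat -> X, ~ (nn_avg_loss R c tb first xs @ \oo --> 0%R).
Proof.
move=> hm vt hs.
have [d0 _] := @close_pair R X Y rho c hs 1 ltr01.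
have [pr hpr] := choice (@choose_pair R X Y rho c d0 hs).
exists (hxs pr d0).
have hp := @pair_mistake R X Y rho c tb first pr d0 hm vt hpr.
have hsum : forall k, (k <= \sum_(t < k.*2) nn_mistake c tb first (hxs pr d0) t)%N.
  elim=> [|k IH]; first by [].
  rewrite doubleS !big_ord_recr /= -addnA -addn1 leq_add //.
move/cvgrPdist_lt => /(_ (1/2)) [].
  lra.
move=> N0 _ hN.
have h1 : (N0 <= N0.*2.+1)%N by rewrite -addnn; lia.
have := hN _ h1 => /=.
rewrite -[N0.*2]addnn.
rewrite /nn_avg_loss sub0r normrN.
set S := (\sum_(t < _) _)%N.
have hS : (N0.+1 <= S)%N by have := hsum N0.+1; rewrite doubleS -addnn.
have Sge : (N0.+1)%:R <= S%:R :> R by rewrite ler_nat.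
rewrite ger0_norm ?divr_ge0 //.
have -> : (N0 + N0).+2%:R = 2 * (N0.+1)%:R :> R.
  by rewrite -natrM mul2n -addnn addnS addSn.
have hpos : 0 < (N0.+1)%:R :> R by rewrite ltr0Sn.
rewrite ltr_pdivrMr ?mulr_gt0 //.
lra.
Qed.

Theorem proposition1 (R : realType) (X Y : Type) (rho : X -> X -> R) (c : X -> Y)
    (tb : seq X -> X -> nat) (first : X -> Y) :
  is_metric rho -> totally_bounded rho -> valid_tiebreak rho tb ->
  (exists xs : nat -> X, ~ (nn_avg_loss R c tb first xs @ \oo --> 0%R))
  <-> class_sep rho c = 0%E.
Proof.
move=> hm htb vt; split.
- move=> [xs hxs]; case: (pselect (class_sep rho c = 0%E)) => // hne.
  by exfalso; apply: hxs; apply: (@partA R X Y rho c tb first xs hm htb vt hne).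
- exact: (@partB R X Y rho c tb first hm vt).
Qed.
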